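(* Let $f\colon\mathbb{R}^k_+\to\operatorname{int}(\mathbb{R}^k_+)$ be continuous and concave with respect to the cone order, and let $U\subset\operatorname{int}(\mathbb{R}^k_+)$ be a compact set containing a nonempty open set. Then $f$ is a local $c$-Lipschitz contraction with respect to Thompson's metric on $U$; that is, there exists $c\in[0,1)$ such that $d_T(f(x),f(y))\le c\, d_T(x,y)$ for all $x,y\in U$.
   Context: $\mathbb{R}^k_+=\{x\in\mathbb{R}^k: x_i\ge 0\ \forall i\}$, $\operatorname{int}(\mathbb{R}^k_+)$ is the set of vectors with all coordinates strictly positive, and $x\le y$ means $y-x\in\mathbb{R}^k_+$. Concavity with respect to the cone order means $f(tx+(1-t)y)\ge tf(x)+(1-t)f(y)$ for all $x,y\in\mathbb{R}^k_+$, $t\in(0,1)$. Thompson's metric on $\operatorname{int}(\mathbb{R}^k_+)$ is $d_T(x,y)=\ln\big(\max\{M(x,y),M(y,x)\}\big)$ with $M(x,y)=\inf\{\beta>0: x\le\beta y\}$. Compactness and continuity refer to the usual topology of $\mathbb{R}^k$ (for subsets of $\operatorname{int}(\mathbb{R}^k_+)$, compactness in the usual topology coincides with compactness in $(\operatorname{int}(\mathbb{R}^k_+),d_T)$). *)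

(* Defs.v *)
From mathcomp Require Import all_boot all_order all_algebra.
From mathcomp Require Import all_classical all_reals all_analysis.
Import numFieldNormedType.Exports.
Set Implicit Arguments. Unset Strict Implicit. Unset Printing Implicit Defensive.
Import Order.TTheory GRing.Theory Num.Theory.
Local Open Scope classical_set_scope.
Local Open Scope ring_scope.

Definition cone (R : realType) (k : nat) : set 'rV[R]_k :=
  [set x | forall i : 'I_k, 0 <= x ord0 i].

Definition icone (R : realType) (k : nat) : set 'rV[R]_k :=
  [set x | forall i : 'I_k, 0 < x ord0 i].

Definition cle (R : realType) (k : nat) (x y : 'rV[R]_k) : Prop :=
  forall i : 'I_k, x ord0 i <= y ord0 i.

Definition cone_concave (R : realType) (k : nat) (f : 'rV[R]_k -> 'rV[R]_k) : Prop :=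
  forall (x y : 'rV[R]_k) (t : R), cone x -> cone y -> 0 < t < 1 ->
    cle (t *: f x + (1 - t) *: f y) (f (t *: x + (1 - t) *: y)).

Definition Mthom (R : realType) (k : nat) (x y : 'rV[R]_k) : R :=
  inf [set b : R | 0 < b /\ cle x (b *: y)].

Definition dT (R : realType) (k : nat) (x y : 'rV[R]_k) : R :=
  ln (Num.max (Mthom x y) (Mthom y x)).

(* Main.v *)
Require Import Defs.
From mathcomp Require Import all_boot all_order all_algebra.
From mathcomp Require Import all_classical all_reals all_analysis.
From mathcomp Require Import ring lra.
Import numFieldNormedType.Exports.
Import Order.TTheory GRing.Theory Num.Theory.
Local Open Scope classical_set_scope.
Local Open Scope ring_scope.

Lemma sum_ge_term (R : realType) (k : nat) (a : 'I_k -> R) i :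
  (forall j, 0 <= a j) -> a i <= \sum_j a j.
Proof. by move=> h; rewrite (bigD1 i) //= lerDl sumr_ge0. Qed.
Arguments sum_ge_term {R k a} i.

Lemma Mle (R : realType) (k : nat) (x y : 'rV[R]_k) (b : R) :
  0 < b -> cle x (b *: y) -> Mthom x y <= b.
Proof.
move=> b0 h; apply: ge_inf => //.
by exists 0 => z [z0 _]; exact: ltW.
Qed.

Lemma Mge (R : realType) (k : nat) (x y : 'rV[R]_k) :
  cone x -> icone y -> forall i, x ord0 i / y ord0 i <= Mthom x y.
Proof.
move=> cx iy i; apply: lb_le_inf.
  exists (1 + \sum_j x ord0 j / y ord0 j); split.
    by rewrite ltr_pwDl // sumr_ge0 // => j _; rewrite divr_ge0 // ltW.
  move=> j; rewrite mxE -ler_pdivrMr //.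
  have nn : forall l, 0 <= x ord0 l / y ord0 l by move=> l; rewrite divr_ge0 // ltW.
  apply: le_trans (sum_ge_term (a := fun l => x ord0 l / y ord0 l) j nn) _.
  by rewrite lerDr.
move=> b [b0 h]; rewrite ler_pdivrMr //.
by have := h i; rewrite mxE.
Qed.

Lemma Mcle (R : realType) (k : nat) (x y : 'rV[R]_k) :
  cone x -> icone y -> cle x (Mthom x y *: y).
Proof.
move=> cx iy i; rewrite mxE -ler_pdivrMr //; exact: Mge.
Qed.

Lemma mono (R : realType) (k : nat) (f : 'rV[R]_k -> 'rV[R]_k) :
  (forall x, cone x -> icone (f x)) -> cone_concave f ->
  forall x y, cone x -> cone y -> cle x y -> cle (f x) (f y).
Proof.
move=> fpos fcc x y cx cy xy i.
set a : R := f x ord0 i; set b : R := f y ord0 i.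
have ha : 0 < a by exact: fpos x cx i.
have hb : 0 < b by exact: fpos y cy i.
case: (leP a b) => // hab; exfalso.
pose t := (a - b) / (2 * a).
have t0 : 0 < t by rewrite divr_gt0 ?subr_gt0 // mulr_gt0.
have a2 : 0 < 2 * a by rewrite mulr_gt0.
have t1 : t < 1 by rewrite /t ltr_pdivrMr // mul1r; lra.
pose u := x + t^-1 *: (y - x).
have cu : cone u.
  move=> j; rewrite !mxE; apply: addr_ge0; first exact: cx.
  apply: mulr_ge0; first by rewrite invr_ge0 ltW.
  by rewrite subr_ge0; exact: xy.
have yE : t *: u + (1 - t) *: x = y.
  apply/matrixP => r j; rewrite !mxE; field; exact: lt0r_neq0.
have := fcc u x t cu cx; rewrite t0 t1 => /(_ isT i).
rewrite yE !mxE -/b -/a => h.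
have hu := fpos u cu i.
have e : (1 - t) * a = (a + b) / 2.
  rewrite /t; field; exact: lt0r_neq0.
have : t * f u ord0 i + (1 - t) * a <= b by [].
rewrite e; move: (mulr_gt0 t0 hu) hab; lra.
Qed.

Lemma mainineq (R : realType) (k : nat) (f : 'rV[R]_k -> 'rV[R]_k) (d b : R) x y :
  (forall x, cone x -> icone (f x)) -> cone_concave f ->
  0 < d -> 1 < b -> cone x -> cone y -> cle x (b *: y) ->
  (forall i, d * f x ord0 i <= f 0 ord0 i) ->
  forall i, f x ord0 i <= b / (1 + (b - 1) * d) * f y ord0 i.
Proof.
move=> fpos fcc d0 b1 cx cy xy hd i.
have b0 : 0 < b by lra.
pose t := b^-1.
have t0 : 0 < t by rewrite invr_gt0.
have t1 : t < 1 by rewrite invf_lt1 //.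
pose u := (b - 1)^-1 *: (b *: y - x).
have cu : cone u.
  move=> j; rewrite !mxE; apply: mulr_ge0; first by rewrite invr_ge0; lra.
  by have := xy j; rewrite mxE subr_ge0.
have yE : t *: x + (1 - t) *: u = y.
  apply/matrixP => r j; rewrite !mxE /t; field.
  by apply/andP; split; [rewrite subr_eq0 gt_eqF | apply: lt0r_neq0].
have := fcc x u t cx cu; rewrite t0 t1 => /(_ isT i).
rewrite yE !mxE => h.
have c0 : cone (0 : 'rV[R]_k) by move=> j; rewrite mxE.
have hu : f 0 ord0 i <= f u ord0 i.
  apply: mono => // j; rewrite mxE; exact: cu.
have := hd i; have := fpos x cx i; have := fpos y cy i.
move: h hu; rewrite /t.
set A : R := f x ord0 i; set B : R := f y ord0 i; set W : R := f u ord0 i; set Z : R := f 0 ord0 i.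
move=> h hu hB hA hZ.
have h2 : A + (b - 1) * W <= b * B.
  have e : b * (b^-1 * A + (1 - b^-1) * W) = A + (b - 1) * W.
    field; exact: lt0r_neq0.
  by rewrite -e ler_pM2l.
have bd : 0 < (b - 1) * d by apply: mulr_gt0 => //; lra.
have den : 0 < 1 + (b - 1) * d by lra.
rewrite mulrAC ler_pdivlMr //.
have : (b - 1) * (d * A) <= (b - 1) * W.
  by rewrite ler_pM2l ?subr_gt0 //; exact: le_trans hZ hu.
nra.
Qed.

Lemma ln_le_sub1 (R : realType) (x : R) : 0 < x -> ln x <= x - 1.
Proof.
move=> x0; have := @le_ln1Dx R (x - 1); rewrite addrCA subrr addr0; apply; lra.
Qed.

Lemma final_scalar (R : realType) (d B b : R) :
  0 < d -> 1 <= b -> b <= B ->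
  ln (b / (1 + (b - 1) * d)) <= (1 - d / (1 + (B - 1) * d)) * ln b.
Proof.
move=> d0 b1 bB.
have b0 : 0 < b by lra.
set s := (b - 1) * d.
have s0 : 0 <= s by apply: mulr_ge0 => //; lra.
have sB : s <= (B - 1) * d by rewrite /s ler_pM2r //; lra.
have p1 : 0 < 1 + s by lra.
have p2 : 0 < 1 + (B - 1) * d by lra.
rewrite ln_div ?posrE //.
have hL := @ln_le_sub1 _ _ b0.
have hs : 1 - (1 + s)^-1 <= ln (1 + s).
  have := @ln_le_sub1 _ ((1 + s)^-1); rewrite invr_gt0 => /(_ p1).
  rewrite lnV ?posrE //; lra.
have e1 : 1 - (1 + s)^-1 = s / (1 + s) by field; exact: lt0r_neq0.
have h3 : s / (1 + (B - 1) * d) <= s / (1 + s).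
  apply: ler_wpM2l => //; rewrite lef_pV2 ?posrE //; lra.
have e2 : d / (1 + (B - 1) * d) * (b - 1) = s / (1 + (B - 1) * d).
  by rewrite /s; field; exact: lt0r_neq0.
set eps := d / (1 + (B - 1) * d).
have eps0 : 0 <= eps by rewrite /eps divr_ge0 // ltW.
have h4 : eps * ln b <= eps * (b - 1) by rewrite ler_wpM2l.
rewrite mulrBl mul1r.
have : eps * (b - 1) <= ln (1 + s) by rewrite e2; lra.
lra.
Qed.
Lemma bnd (R : realType) (k : nat) (U : set 'rV[R]_k) (g : 'rV[R]_k -> R) :
  compact U -> {within U, continuous g} -> exists K : R, forall x, U x -> `|g x| <= K.
Proof.
move=> cU cg.
have := compact_bounded (continuous_compact cg cU).
move=> [M [_ HM]].
exists (M + 1) => x Ux.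
apply: (HM (M+1)); first by rewrite ltrDl.
by exists x.
Qed.
Lemma lowb (R : realType) (k : nat) (U : set 'rV[R]_k) (i : 'I_k) :
  compact U -> (forall x, U x -> 0 < x ord0 i) ->
  exists l : R, 0 < l /\ forall x, U x -> l <= x ord0 i.
Proof.
move=> cU pos.
have cg : {within U, continuous (fun x : 'rV[R]_k => (x ord0 i)^-1)}.
  apply: continuous_in_subspaceT => x Ux.
  have nz : x ord0 i != 0 by rewrite gt_eqF // pos //; exact: set_mem Ux.
  exact: (cvgV nz (@coord_continuous R 1 k ord0 i x)).
have [K HK] := @bnd _ _ _ _ cU cg.
exists (1 + `|K|)^-1; split; first by rewrite invr_gt0 ltr_pwDl.
move=> x Ux; have px := pos x Ux.
have := HK x Ux; rewrite ger0_norm; last by rewrite invr_ge0 ltW.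
move=> h.
have Kp : 0 < 1 + `|K| by rewrite ltr_pwDl.
rewrite -[x ord0 i]invrK lef_pV2 ?posrE ?invr_gt0 //.
by rewrite (le_trans h) // (le_trans (ler_norm K)) // lerDr.
Qed.
Lemma upb (R : realType) (k : nat) (U : set 'rV[R]_k) (i : 'I_k) :
  compact U -> exists m : R, 0 <= m /\ forall x, U x -> x ord0 i <= m.
Proof.
move=> cU.
have [K HK] := @bnd _ _ _ _ cU (continuous_subspaceT (@coord_continuous R 1 k ord0 i)).
exists `|K|; split => // x Ux.
exact: le_trans (ler_norm _) (le_trans (HK x Ux) (ler_norm K)).
Qed.

Arguments Mle {R k x y b}.
Arguments Mge {R k x y}.
Arguments Mcle {R k x y}.
Arguments mono {R k f}.
Arguments mainineq {R k f d b x y}.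
Arguments final_scalar {R d B b}.

Theorem proposition1 (R : realType) (k : nat) (f : 'rV[R]_k -> 'rV[R]_k)
  (U : set 'rV[R]_k) :
  {within @cone R k, continuous f} ->
  (forall x, @cone R k x -> @icone R k (f x)) ->
  cone_concave f ->
  U `<=` @icone R k ->
  compact U ->
  (exists V : set 'rV[R]_k, open V /\ V !=set0 /\ V `<=` U) ->
  exists c : R, 0 <= c < 1 /\
    forall x y, U x -> U y -> dT (f x) (f y) <= c * dT x y.
Proof.
move=> _ fpos fcc sUi cU _.
case: k f U fpos fcc sUi cU => [|n] f U fpos fcc sUi cU.
  exists 0; split; first by rewrite lexx ltr01.
  move=> x y _ _; rewrite mul0r /dT; apply: ln_le0.
  by rewrite ge_max; apply/andP; split; apply: Mle => //; case.
have cU' : forall x, U x -> cone x by move=> x Ux i; apply: ltW; exact: sUi.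
have /choice [L HL] : forall i : 'I_n.+1, exists l : R, 0 < l /\ forall x, U x -> l <= x ord0 i.
  move=> i; apply: lowb => // x Ux; exact: sUi.
have /choice [Mu HM] : forall i : 'I_n.+1, exists m : R, 0 <= m /\ forall x, U x -> x ord0 i <= m.
  move=> i; exact: upb.
pose mv : 'rV[R]_n.+1 := \row_i Mu i.
have cmv : cone mv by move=> i; rewrite mxE; case: (HM i).
have xmv : forall x, U x -> cle x mv.
  by move=> x Ux i; rewrite mxE; case: (HM i) => _; apply.
have c0 : cone (0 : 'rV[R]_n.+1) by move=> j; rewrite mxE.
pose F := f mv. have iF : icone F := fpos mv cmv.
pose F0 := f 0. have iF0 : icone F0 := fpos 0 c0.
pose S := \sum_i F ord0 i / F0 ord0 i.
have nnS : forall i, 0 <= F ord0 i / F0 ord0 i by move=> i; rewrite divr_ge0 // ltW.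
have S0 : 0 <= S by apply: sumr_ge0 => i _.
pose d := (1 + S)^-1.
have S1 : 0 < 1 + S by lra.
have d0 : 0 < d by rewrite invr_gt0.
have hd : forall x, U x -> forall i, d * f x ord0 i <= F0 ord0 i.
  move=> x Ux i.
  have fxF : f x ord0 i <= F ord0 i by apply: mono => //; [exact: cU' | exact: xmv].
  have := sum_ge_term (a := fun j => F ord0 j / F0 ord0 j) i nnS.
  rewrite -/S ler_pdivrMr // => h.
  rewrite mulrC ler_pdivrMr //.
  have := iF0 i; have := iF i; move: h fxF.
  set a : R := f x ord0 i; set b : R := F ord0 i; set c : R := F0 ord0 i.
  nra.
pose B := 1 + \sum_i Mu i / L i.
have nnB : forall i, 0 <= Mu i / L i.
  by move=> i; case: (HL i) => l0 _; case: (HM i) => m0 _; rewrite divr_ge0 // ltW.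
have B1 : 1 <= B by rewrite lerDl sumr_ge0.
have xBy : forall x y, U x -> U y -> cle x (B *: y).
  move=> x y Ux Uy i; rewrite mxE.
  have := sum_ge_term (a := fun j => Mu j / L j) i nnB.
  case: (HL i) => l0 /(_ y Uy) ly; case: (HM i) => m0 /(_ x Ux) mx.
  rewrite ler_pdivrMr // => h.
  move: ly mx h l0 m0 B1; rewrite /B.
  set s : R := \sum_j _.
  set a : R := x ord0 i; set b : R := y ord0 i; set l : R := L i; set m : R := Mu i.
  nra.
pose eps := d / (1 + (B - 1) * d).
have Bm : 0 <= B - 1 by rewrite subr_ge0.
have Bd := mulr_ge0 Bm (ltW d0).
have p2 : 0 < 1 + (B - 1) * d by lra.
exists (1 - eps); split.
  have e0 : 0 < eps by rewrite divr_gt0.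
  have e1 : eps <= 1.
    rewrite ler_pdivrMr // mul1r.
    have : d <= 1 by rewrite invf_le1 //; lra.
    lra.
  apply/andP; split; lra.
move=> x y Ux Uy.
have ix := sUi x Ux; have iy := sUi y Uy.
have cx := cU' x Ux; have cy := cU' y Uy.
rewrite /dT.
set Mxy := Mthom x y; set Myx := Mthom y x.
have B0 : 0 < B by lra.
have hMxy : Mxy <= B := Mle B0 (xBy x y Ux Uy).
have hMyx : Myx <= B := Mle B0 (xBy y x Uy Ux).
have r1 := Mge cx iy ord0; have r2 := Mge cy ix ord0.
set be := Num.max Mxy Myx.
have be1 : 1 <= be.
  rewrite le_max; case: (leP 1 (x ord0 ord0 / y ord0 ord0)) => hp.
    by rewrite (le_trans hp r1).
  apply/orP; right; apply: le_trans r2.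
  rewrite -[y ord0 ord0 / _]invf_div; apply: ltW; rewrite invf_gt1 //.
  by rewrite divr_gt0.
have beB : be <= B by rewrite ge_max hMxy hMyx.
have xby : cle x (be *: y).
  move=> i; have := Mcle cx iy i; rewrite !mxE => h; apply: le_trans h _.
  apply: ler_wpM2r; first exact: ltW (iy i).
  by rewrite /be le_max lexx.
have ybx : cle y (be *: x).
  move=> i; have := Mcle cy ix i; rewrite !mxE => h; apply: le_trans h _.
  apply: ler_wpM2r; first exact: ltW (ix i).
  by rewrite /be le_max lexx orbT.
pose ga := be / (1 + (be - 1) * d).
have den : 0 < 1 + (be - 1) * d.
  have bm : 0 <= be - 1 by rewrite subr_ge0.
  have := mulr_ge0 bm (ltW d0); lra.
have ga0 : 0 < ga by rewrite divr_gt0 //; lra.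
have key : forall u v, U u -> U v -> cle u (be *: v) -> cle (f u) (ga *: f v).
  move=> u v Uu Uv uv i; rewrite mxE.
  case: (ltP 1 be) => hbe.
    exact: mainineq fpos fcc d0 hbe (cU' u Uu) (cU' v Uv) uv (hd u Uu) i.
  have be_1 : be = 1 by apply/eqP; rewrite eq_le hbe be1.
  rewrite /ga be_1 subrr mul0r addr0 divr1 mul1r.
  apply: mono => //; try exact: cU'.
  by move=> j; have := uv j; rewrite mxE be_1 mul1r.
have M1 : Mthom (f x) (f y) <= ga := Mle ga0 (key x y Ux Uy xby).
have M2 : Mthom (f y) (f x) <= ga := Mle ga0 (key y x Uy Ux ybx).
have ifx := fpos x cx; have ify := fpos y cy.
have Mp : 0 < Mthom (f x) (f y).
  apply: lt_le_trans (Mge (fun i => ltW (ifx i)) ify ord0).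
  by rewrite divr_gt0.
apply: le_trans (final_scalar d0 be1 beB).
have mp : 0 < Num.max (Mthom (f x) (f y)) (Mthom (f y) (f x)).
  by rewrite lt_max Mp.
rewrite ler_ln ?posrE //.
by rewrite ge_max M1 M2.
Qed.
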